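(* For every $T\ge T_0[\varphi_1]$ and $U\in(0,T/\ln T]$, with $\mathcal{J}(T,U)=[T,T+U]$ and $\mathring{\mathcal{J}}(T,U)=[\varphi_1^{-1}(T),\varphi_1^{-1}(T+U)]$, there exists $\xi\in(\varphi_1^{-1}(T),\varphi_1^{-1}(T+U))$ with $\tilde Z(\xi)\ne0$ and $$\tilde Z^2(\xi)=\frac{|\mathcal{J}(T,U)|}{|\mathring{\mathcal{J}}(T,U)|}.$$
   Context: Let $Z(t)=e^{i\vartheta(t)}\zeta(\tfrac12+it)$ with $\vartheta(t)=-\frac t2\ln\pi+\operatorname{Im}\ln\Gamma(\frac14+\frac{it}{2})$. Let $\mu(y)$ be continuous with $\mu(y)\ge 7y\ln y$ and $\Phi(\varphi)=\int_0^{\mu[\varphi]}Z^2(t)e^{-2t/\varphi}\,dt$. A Jacob's ladder is a continuous solution $\varphi(T)$, $T\ge T_0$, of $\Phi(\varphi(T))=\int_0^T Z^2(t)\,dt$ (from the author's earlier work). Put $\varphi_1=\frac12\varphi$ (defined for $T\ge T_0[\varphi_1]$) and $\tilde Z^2(t)=\frac{Z^2(t)}{2\Phi'(\varphi(t))}$, so $\varphi_1'=\tilde Z^2$. $\varphi_1$ is increasing and $\varphi_1^{-1}(x)$ denotes the unique $t$ with $\varphi_1(t)=x$; $|I|$ denotes the length of a segment $I$. *)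

(* Defs.v *)
From Stdlib Require Import Reals.
From Coquelicot Require Import Coquelicot.
Open Scope R_scope.

Definition euler_gamma : R :=
  real (Lim_seq (fun n => sum_n (fun k => / INR (k + 1)) n - ln (INR (n + 1)))).

(* Im ln Gamma(x + i y), x > 0, for the analytic (principal) branch of
   ln Gamma on Re z > 0 given by the Weierstrass product:
   ln Gamma(z) = -gamma z - Log z + sum_{k>=1} (z/k - Log(1 + z/k)). *)
Definition ImLnGamma (x y : R) : R :=
  - euler_gamma * y - atan (y / x)
  + Series (fun k => y / INR (k + 1) - atan (y / (x + INR (k + 1)))).

Definition vartheta (t : R) : R := - (t / 2) * ln PI + ImLnGamma (1 / 4) (t / 2).

(* zeta(1/2 + i t) via the Dirichlet eta function:
   zeta(s) = eta(s) / (1 - 2^{1-s}), eta(s) = sum_{n>=1} (-1)^{n-1} n^{-s},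
   with n^{-s} = n^{-1/2} (cos (t ln n) - i sin (t ln n)). *)
Definition eta_crit_re (t : R) : R :=
  Series (fun n => (-1) ^ n * / sqrt (INR (n + 1)) * cos (t * ln (INR (n + 1)))).
Definition eta_crit_im (t : R) : R :=
  Series (fun n => - ((-1) ^ n * / sqrt (INR (n + 1)) * sin (t * ln (INR (n + 1))))).

Definition zeta_crit (t : R) : C :=
  Cdiv (eta_crit_re t, eta_crit_im t)
       (1 - sqrt 2 * cos (t * ln 2), sqrt 2 * sin (t * ln 2)).

(* Hardy's function: Zc(t) = e^{i vartheta(t)} zeta(1/2 + i t) (complex-valued
   a priori; it is real by the functional equation) and Z(t) its real value. *)
Definition Zc (t : R) : C := Cmult (cos (vartheta t), sin (vartheta t)) (zeta_crit t).
Definition HardyZ (t : R) : R := Re (Zc t).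

Definition PhiJ (mu : R -> R) (y : R) : R :=
  RInt (fun t => (HardyZ t) ^ 2 * exp (- 2 * t / y)) 0 (mu y).

Definition phi1 (phi : R -> R) (t : R) : R := phi t / 2.

Definition Ztilde2 (mu phi : R -> R) (t : R) : R :=
  (HardyZ t) ^ 2 / (2 * Derive (PhiJ mu) (phi t)).

(* Main.v *)
Require Import Defs.
From Stdlib Require Import Reals Lra.
From Coquelicot Require Import Coquelicot.
Open Scope R_scope.

Theorem corollary3 (mu phi : R -> R) (T0 : R)
  (Hmu_cont : forall y, continuous mu y)
  (Hmu_ge : forall y, 0 < y -> 7 * y * ln y <= mu y)
  (Hphi_cont : forall T, T0 <= T ->
     filterlim phi (within (fun x => T0 <= x) (locally T)) (locally (phi T)))
  (Hladder : forall T, T0 <= T -> PhiJ mu (phi T) = RInt (fun t => (HardyZ t) ^ 2) 0 T)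
  (Hphi1_incr : forall t s, T0 <= t -> t < s -> phi1 phi t < phi1 phi s)
  (Hphi1_deriv : forall t, T0 < t -> is_derive (phi1 phi) t (Ztilde2 mu phi t)) :
  forall T U : R, T0 <= T -> 0 < U -> U <= T / ln T ->
  forall a b : R, T0 <= a -> T0 <= b -> phi1 phi a = T -> phi1 phi b = T + U ->
  exists xi : R, a < xi < b /\ Ztilde2 mu phi xi <> 0 /\
    Ztilde2 mu phi xi = ((T + U) - T) / (b - a).
Proof.
  intros T U _ HU _ a b Ha Hb Hpa Hpb.
  assert (Hab : a < b).
  { destruct (Rlt_or_le a b) as [H|H]; auto.
    destruct H as [H|H].
    - pose proof (Hphi1_incr b a Hb H). lra.
    - subst. lra. }
  set (h := fun x => phi1 phi (Rmax x a)).
  assert (Hloc : forall c, a < c -> locally c (fun t => phi1 phi t = h t)).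
  { intros c Hc. apply (locally_interval _ c a p_infty); simpl; auto.
    intros y Hy _. unfold h. rewrite Rmax_left; lra. }
  assert (Hd : forall c, a < c -> derivable_pt_lim h c (Ztilde2 mu phi c)).
  { intros c Hc. apply is_derive_Reals.
    apply (is_derive_ext_loc (phi1 phi)); [apply Hloc; auto|].
    apply Hphi1_deriv. lra. }
  assert (pr1 : forall c, a < c < b -> derivable_pt h c).
  { intros c Hc. exists (Ztilde2 mu phi c). apply Hd. lra. }
  assert (Hcont : forall c, a <= c <= b -> continuity_pt h c).
  { intros c [Hc1 Hc2]. destruct Hc1 as [Hc1|Hc1].
    - apply derivable_continuous_pt. exists (Ztilde2 mu phi c). apply Hd. auto.
    - subst c. unfold h, phi1.
      apply continuity_pt_div; [|apply continuity_pt_const; intros ? ?; reflexivity|lra].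
      apply continuity_pt_filterlim.
      eapply filterlim_comp with (G := within (fun x => T0 <= x) (locally a)).
      + intros P [eps HP]. exists eps. intros y Hy. apply HP;
        [|unfold Rmax; destruct (Rle_dec y a); lra].
        revert Hy. unfold ball; simpl; unfold AbsRing_ball, abs, minus, plus, opp; simpl.
        intros Hy. unfold Rmax. destruct (Rle_dec y a).
        * replace (a + - a) with 0 by ring. rewrite Rabs_R0. apply cond_pos.
        * eapply Rle_lt_trans; [|exact Hy]. apply Req_le. reflexivity.
      + rewrite Rmax_right; [|lra]. apply Hphi_cont. lra. }
  destruct (MVT h id a b pr1 (fun c _ => derivable_pt_id c) Hab Hcont
             (fun c _ => derivable_continuous_pt _ _ (derivable_pt_id c)))
    as [c [Pc Hc]].
  rewrite derive_pt_id in Hc.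
  rewrite (derive_pt_eq_0 _ _ _ _ (Hd c ltac:(lra))) in Hc.
  unfold h, id in Hc. rewrite Rmax_left in Hc by lra. rewrite Rmax_left in Hc by lra.
  rewrite Hpa, Hpb in Hc.
  exists c. split; [exact Pc|].
  assert (E : Ztilde2 mu phi c = (T + U - T) / (b - a)).
  { field_simplify_eq; [|lra]. lra. }
  split; [|exact E]. rewrite E. intro H0.
  unfold Rdiv in H0. apply Rmult_integral in H0. destruct H0 as [H0|H0]; [lra|].
  apply Rinv_neq_0_compat in H0; auto. lra.
Qed.
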